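(* Let $\ell>0$. The functions $D_\ell$, $\Gamma_\ell$ and $\sqrt{\Gamma_\ell}$ on $\mathbb R_+$ are positive, globally Lipschitz continuous and bounded. The function $A_\ell$ is bounded above but not below; it has continuous first derivative on all of $\mathbb R_+$ and is locally Lipschitz, in particular $|A_\ell(x)-A_\ell(y)|\lesssim(1+|x|)|y-x|$ for $x,y\in\mathbb R_+$. Moreover $A_\ell(x)>0$ for $x\in[0,1)$, $A_\ell(x)<0$ for $x>1$, and $A_\ell(1)=0$.
   Context: $\mathbb R_+=[0,\infty)$; $a\lesssim b$ means $a\le Kb$ for a constant $K$ independent of $x,y$. With $\Phi$ the standard normal cdf: for $x>0$, $D_\ell(x)=2\ell^2e^{\ell^2(x-1)}\Phi\big(\tfrac{\ell(1-2x)}{\sqrt{2x}}\big)$, $\Gamma_\ell(x)=D_\ell(x)+2\ell^2\Phi\big(-\tfrac{\ell}{\sqrt{2x}}\big)$, $A_\ell(x)=-2xD_\ell(x)+\Gamma_\ell(x)$; and $D_\ell(0)=\Gamma_\ell(0)=A_\ell(0)=2\ell^2e^{-\ell^2}$. *)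

(* Defs.v *)
From Stdlib Require Import Reals Lra.
From Coquelicot Require Import Coquelicot.
Open Scope R_scope.

Definition Phi (x : R) : R :=
  / 2 + / sqrt (2 * PI) * RInt (fun t => exp (- (t ^ 2) / 2)) 0 x.

(* The functions are only relevant on R_+ = [0,oo); for x <= 0 we use the
   value prescribed at 0 (only x = 0 matters). *)
Definition D_ (l x : R) : R :=
  if Rle_dec x 0 then 2 * l ^ 2 * exp (- l ^ 2)
  else 2 * l ^ 2 * exp (l ^ 2 * (x - 1)) * Phi (l * (1 - 2 * x) / sqrt (2 * x)).

Definition Gamma_ (l x : R) : R :=
  if Rle_dec x 0 then 2 * l ^ 2 * exp (- l ^ 2)
  else D_ l x + 2 * l ^ 2 * Phi (- l / sqrt (2 * x)).

Definition A_ (l x : R) : R :=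
  if Rle_dec x 0 then 2 * l ^ 2 * exp (- l ^ 2)
  else - 2 * x * D_ l x + Gamma_ l x.

Definition pos_on_Rplus (f : R -> R) : Prop := forall x, 0 <= x -> 0 < f x.

Definition lipschitz_on_Rplus (f : R -> R) : Prop :=
  exists L, forall x y, 0 <= x -> 0 <= y -> Rabs (f x - f y) <= L * Rabs (x - y).

Definition bounded_on_Rplus (f : R -> R) : Prop :=
  exists M, forall x, 0 <= x -> Rabs (f x) <= M.

Definition bounded_above_on_Rplus (f : R -> R) : Prop :=
  exists M, forall x, 0 <= x -> f x <= M.

Definition bounded_below_on_Rplus (f : R -> R) : Prop :=
  exists M, forall x, 0 <= x -> M <= f x.

Definition loc_lipschitz_on_Rplus (f : R -> R) : Prop :=
  forall M, 0 <= M -> exists L, forall x y, 0 <= x <= M -> 0 <= y <= M ->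
    Rabs (f x - f y) <= L * Rabs (x - y).

Definition C1_on_Rplus (f : R -> R) : Prop :=
  exists f' : R -> R,
    (forall x, 0 <= x ->
       filterlim (fun y => (f y - f x) / (y - x))
         (within (fun y => 0 <= y /\ y <> x) (locally x)) (locally (f' x))) /\
    (forall x, 0 <= x ->
       filterlim f' (within (fun y => 0 <= y) (locally x)) (locally (f' x))).

(* Main.v *)
Require Import Defs.
From Stdlib Require Import Reals Lra Psatz.
From Coquelicot Require Import Coquelicot.
Open Scope R_scope.

Ltac exp_norm :=
  repeat match goal with
  | |- context [exp ?a] => match goal with |- context [exp ?b] =>
        assert_fails (constr_eq a b);
        let H := fresh in assert (H : a = b) by (solve [ring | field | field; nra]); rewrite H; clear H end
  end.

Ltac rq := match goal with |- @eq _ ?a ?b => change (@eq R a b) end.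

Definition f0 (t : R) : R := exp (- (t ^ 2) / 2).

Lemma exd_cont (f : R -> R) x : ex_derive f x -> continuous f x.
Proof. intros H. exact (@ex_derive_continuous R_AbsRing R_NormedModule f x H). Qed.

Lemma exRInt_cont (f : R -> R) a b :
  (forall z, Rmin a b <= z <= Rmax a b -> continuous f z) -> ex_RInt f a b.
Proof. intros H. exact (@ex_RInt_continuous R_CompleteNormedModule f a b H). Qed.

Lemma f0_pos t : 0 < f0 t.
Proof. apply exp_pos. Qed.

Lemma f0_cont t : continuous f0 t.
Proof. apply exd_cont. unfold f0. auto_derive. auto. Qed.

Lemma f0_exRInt a b : ex_RInt f0 a b.
Proof. apply exRInt_cont. intros; apply f0_cont. Qed.

Definition G (x : R) : R := RInt f0 0 x.

Lemma G_deriv (x : R) : is_derive G x (f0 x).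
Proof.
  apply (@is_derive_RInt R_CompleteNormedModule) with (a := 0).
  - apply filter_forall. intros. apply (@RInt_correct R_CompleteNormedModule), f0_exRInt.
  - apply f0_cont.
Qed.

Lemma exp_cont2d (g : R -> R -> R) x y :
  continuity_2d_pt g x y -> continuity_2d_pt (fun u v => exp (g u v)) x y.
Proof.
  intros H. apply continuity_2d_pt_filterlim in H.
  apply continuity_2d_pt_filterlim.
  apply (filterlim_comp _ _ _ (fun z => g (fst z) (snd z)) exp _ _ _ H).
  apply exd_cont. auto_derive. auto.
Qed.

Definition fk (u t : R) : R := exp (- (u ^ 2 * (1 + t ^ 2)) / 2) / (1 + t ^ 2).

Lemma fk_d (u t : R) : is_derive (fun z => fk z t) u (- u * exp (- (u ^ 2 * (1 + t ^ 2)) / 2)).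
Proof.
  unfold fk. auto_derive. auto.
  exp_norm. field. nra.
Qed.

Definition Hint1 (x : R) : R := RInt (fun t => fk x t) 0 1.

Lemma fk_cont x t : continuous (fun t => fk x t) t.
Proof. apply exd_cont. unfold fk. auto_derive. nra. Qed.

Lemma H1_deriv (x : R) : is_derive Hint1 x (- f0 x * G x).
Proof.
  assert (E : RInt (fun t => Derive (fun u => fk u t) x) 0 1 = - f0 x * G x).
  { rewrite (RInt_ext _ (fun t => scal (- f0 x) (scal x (f0 (x * t + 0))))).
    2:{ intros t _. cbv beta. erewrite is_derive_unique; [|apply fk_d].
        unfold scal; simpl; unfold mult; simpl; unfold f0.
replace (exp (- (x * (x * 1) * (1 + t * (t * 1))) / 2)) with (exp (- x ^ 2 / 2) * exp (- (x * t + 0) ^ 2 / 2)).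
        ring. rewrite <- exp_plus. f_equal. field. }
    rewrite (@RInt_scal R_CompleteNormedModule).
    2:{ apply exRInt_cont. intros. apply (continuous_scal_r x (fun t => f0 (x*t+0))).
        apply continuous_comp. apply exd_cont; auto_derive; auto. apply f0_cont. }
    rewrite (@RInt_comp_lin R_CompleteNormedModule). 2: apply f0_exRInt.
    unfold G. replace (x*0+0) with 0 by ring. replace (x*1+0) with x by ring.
    reflexivity. }
  rewrite <- E. unfold Hint1.
  apply (is_derive_RInt_param fk 0 1 x).
  - apply filter_forall. intros y t _. eexists. apply fk_d.
  - intros t _.
    apply continuity_2d_pt_ext with (f := fun u v => - u * exp (- (u ^ 2 * (1 + v ^ 2)) / 2)).
    { intros u v. symmetry. apply is_derive_unique, fk_d. }
    apply continuity_2d_pt_mult.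
    + apply continuity_2d_pt_opp, continuity_2d_pt_id1.
    + apply exp_cont2d.
      apply continuity_2d_pt_ext with (f := fun u v => (- / 2) * (u * u * (1 + v * v))).
      { intros; field. }
      apply continuity_2d_pt_mult. apply continuity_2d_pt_const.
      apply continuity_2d_pt_mult. apply continuity_2d_pt_mult; apply continuity_2d_pt_id1.
      apply continuity_2d_pt_plus. apply continuity_2d_pt_const.
      apply continuity_2d_pt_mult; apply continuity_2d_pt_id2.
  - apply filter_forall. intros y. apply exRInt_cont. intros; apply fk_cont.
Qed.

Lemma der_cont (f : R -> R) x l : is_derive f x l -> continuity_pt f x.
Proof.
  intros H. apply is_derive_Reals in H. apply derivable_continuous_pt.
  exists l. exact H.
Qed.

Lemma mvt_cl (f df : R -> R) a b : a <= b ->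
  (forall x, a < x < b -> is_derive f x (df x)) ->
  (forall x, a <= x <= b -> continuity_pt f x) ->
  exists c, a <= c <= b /\ f b - f a = df c * (b - a).
Proof.
  intros Hab Hd Hc.
  destruct (MVT_gen f a b df) as [c [Hc1 Hc2]].
  - rewrite Rmin_left, Rmax_right by lra. exact Hd.
  - rewrite Rmin_left, Rmax_right by lra. exact Hc.
  - rewrite Rmin_left, Rmax_right in Hc1 by lra. exists c. auto.
Qed.

Lemma mvt_der (f df : R -> R) a b : a < b ->
  (forall x, a <= x <= b -> is_derive f x (df x)) ->
  exists c, a < c < b /\ f b - f a = df c * (b - a).
Proof.
  intros Hab Hd. destruct (MVT_cor2 f df a b Hab) as [c [Hc1 Hc2]].
  - intros; apply is_derive_Reals, Hd; auto.
  - exists c; auto.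
Qed.

Lemma const_der (f : R -> R) : (forall x, is_derive f x 0) -> forall x y, f x = f y.
Proof.
  intros H x y. destruct (Rtotal_order x y) as [h|[h|h]].
  - destruct (mvt_der f (fun _ => 0) x y) as [c [_ Hc]]; auto. lra.
  - subst; auto.
  - destruct (mvt_der f (fun _ => 0) y x) as [c [_ Hc]]; auto. lra.
Qed.

Lemma incr_der (f df : R -> R) a b : a < b ->
  (forall x, a <= x <= b -> is_derive f x (df x)) ->
  (forall x, a < x < b -> 0 < df x) -> f a < f b.
Proof.
  intros Hab Hd Hp.
  destruct (mvt_der f df a b) as [c [Hc1 Hc2]]; auto.
  specialize (Hp c Hc1). nra.
Qed.

Lemma der_comp (f g : R -> R) x df dg :
  is_derive f (g x) df -> is_derive g x dg -> is_derive (fun t => f (g t)) x (df * dg).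
Proof.
  intros Hf Hg. pose proof (is_derive_comp f g x df dg Hf Hg) as H.
  unfold scal in H; simpl in H; unfold mult in H; simpl in H.
  rewrite Rmult_comm. exact H.
Qed.

Definition hG (x : R) : R := Hint1 x + G x ^ 2 / 2.

Lemma hG_const (x : R) : hG x = hG 0.
Proof.
  apply const_der. intros y.
  assert (Hd : is_derive hG y (- f0 y * G y + G y * f0 y)).
  { unfold hG. apply (@is_derive_plus R_AbsRing R_NormedModule). apply H1_deriv.
    replace (G y * f0 y) with ((2 * G y / 2) * f0 y) by field.
    apply (der_comp (fun w => w ^ 2 / 2) G). auto_derive; auto; field.
    apply G_deriv. }
  replace (- f0 y * G y + G y * f0 y) with 0 in Hd by ring. exact Hd.
Qed.

Lemma G0 : G 0 = 0.
Proof. unfold G. apply (@RInt_point R_CompleteNormedModule). Qed.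

Lemma hG0 : hG 0 = PI / 4.
Proof.
  unfold hG. rewrite G0. unfold Hint1.
  rewrite (RInt_ext _ (fun t => / (1 + t ^ 2))).
  2:{ intros t _. unfold fk. replace (- (0 ^ 2 * (1 + t ^ 2)) / 2) with 0 by (simpl; field).
      rewrite exp_0. unfold Rdiv; apply Rmult_1_l. }
  assert (H : is_RInt (fun t => / (1 + t ^ 2)) 0 1 (minus (atan 1) (atan 0))).
  { apply (@is_RInt_derive R_CompleteNormedModule).
    - intros x _. apply is_derive_Reals. apply derivable_pt_lim_atan.
    - intros x _. apply exd_cont. auto_derive. nra. }
  apply (@is_RInt_unique R_CompleteNormedModule) in H. rewrite H. rewrite atan_1, atan_0.
  unfold minus, plus, opp; simpl. field.
Qed.

Lemma G_sq_le (x : R) : G x ^ 2 <= PI / 2 /\ PI / 2 - G x ^ 2 <= 2 * f0 x.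
Proof.
  pose proof (hG_const x) as H. rewrite hG0 in H. unfold hG in H.
  assert (E : forall t, 0 <= fk x t <= f0 x).
  { intros t. unfold fk, f0. split.
    - apply Rle_mult_inv_pos. apply Rlt_le, exp_pos. nra.
    - apply (Rle_trans _ (exp (- (x ^ 2 * (1 + t ^ 2)) / 2))).
      + assert (0 < exp (- (x ^ 2 * (1 + t ^ 2)) / 2)) by apply exp_pos.
        assert (1 <= 1 + t ^ 2) by nra.
        assert (/ (1 + t ^ 2) <= 1).
        { apply (Rle_trans _ (/ 1)). apply Rinv_le_contravar; lra. rewrite Rinv_1; lra. }
        unfold Rdiv at 2. nra.
      + destruct (Req_dec (- (x ^ 2 * (1 + t ^ 2)) / 2) (- (x^2)/2)) as [e|ne].
        rewrite e; lra. apply Rlt_le, exp_increasing. nra. }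
  assert (Hex : ex_RInt (fun t => fk x t) 0 1).
  { apply exRInt_cont. intros; apply fk_cont. }
  assert (0 <= Hint1 x).
  { apply RInt_ge_0; auto. lra. intros; apply E. }
  assert (Hint1 x <= f0 x).
  { unfold Hint1. apply (Rle_trans _ (RInt (fun _ => f0 x) 0 1)).
    apply RInt_le; auto. lra. apply ex_RInt_const. intros; apply E.
    rewrite RInt_const. unfold scal; simpl; unfold mult; simpl. lra. }
  lra.
Qed.

Lemma dplus (f g : R -> R) x a b :
  is_derive f x a -> is_derive g x b -> is_derive (fun t => f t + g t) x (a + b).
Proof.
  intros Hf Hg. apply is_derive_Reals. apply is_derive_Reals in Hf, Hg.
  exact (derivable_pt_lim_plus f g x a b Hf Hg).
Qed.

Lemma dmult (f g : R -> R) x a b :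
  is_derive f x a -> is_derive g x b -> is_derive (fun t => f t * g t) x (a * g x + f x * b).
Proof.
  intros Hf Hg. apply is_derive_Reals. apply is_derive_Reals in Hf, Hg.
  exact (derivable_pt_lim_mult f g x a b Hf Hg).
Qed.

Lemma dconst (c : R) x : is_derive (fun _ => c) x 0.
Proof. apply is_derive_Reals. apply derivable_pt_lim_const. Qed.

Lemma dext (f g : R -> R) x a b :
  (forall t, f t = g t) -> a = b -> is_derive f x a -> is_derive g x b.
Proof. intros H e Hf. subst. apply (is_derive_ext f g x b H Hf). Qed.

Definition cst : R := / sqrt (2 * PI).

Lemma PI_ge3 : 3 <= PI.
Proof. pose proof PI2_3_2. lra. Qed.

Lemma cst_pos : 0 < cst.
Proof. unfold cst. apply Rinv_0_lt_compat, sqrt_lt_R0. pose proof PI_RGT_0; lra. Qed.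

Lemma cst_sq : cst ^ 2 = / (2 * PI).
Proof.
  unfold cst. rewrite pow_inv. f_equal. simpl. rewrite Rmult_1_r.
  apply sqrt_sqrt. pose proof PI_RGT_0; lra.
Qed.

Lemma Phi_eq (x : R) : Phi x = / 2 + cst * G x.
Proof. reflexivity. Qed.

Lemma Phi_deriv (x : R) : is_derive Phi x (cst * f0 x).
Proof.
  apply (is_derive_ext (fun y => / 2 + cst * G y)). { intros; symmetry; apply Phi_eq. }
  eapply dext. 3: apply dplus. 3: apply dconst. 3: apply dmult. 3: apply dconst. 3: apply G_deriv.
  reflexivity. simpl. ring.
Qed.

Lemma f0_even (x : R) : f0 (- x) = f0 x.
Proof. unfold f0. replace ((- x) ^ 2) with (x ^ 2) by ring. reflexivity. Qed.

Lemma G_odd (x : R) : G (- x) = - G x.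
Proof.
  assert (H : forall y, is_derive (fun z => G z + G (- z)) y 0).
  { intros y. replace 0 with (f0 y + f0 (- y) * (-1)).
    2:{ rewrite f0_even. ring. }
    apply dplus. apply G_deriv.
    apply (der_comp G (fun z => - z)). apply G_deriv. auto_derive; auto. }
  pose proof (const_der _ H x 0). simpl in H0.
  replace (-0) with 0 in H0 by ring. rewrite G0 in H0. lra.
Qed.

Lemma G_incr (x y : R) : x < y -> G x < G y.
Proof.
  intros h. apply (incr_der G f0); auto.
  intros; apply G_deriv. intros; apply f0_pos.
Qed.

Lemma G_nonneg (x : R) : 0 <= x -> 0 <= G x.
Proof.
  intros h. destruct (Req_dec x 0). subst; rewrite G0; lra.
  rewrite <- G0. left. apply G_incr. lra.
Qed.

Lemma cG_le (x : R) : cst * G x <= / 2.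
Proof.
  destruct (G_sq_le x) as [h1 h2].
  assert (h3 : (cst * G x) ^ 2 <= / 4).
  { rewrite Rpow_mult_distr, cst_sq. pose proof PI_RGT_0.
    apply (Rmult_le_reg_l (2 * PI)). lra.
    replace (2 * PI * (/ (2 * PI) * G x ^ 2)) with (G x ^ 2) by (field; lra). lra. }
  nra.
Qed.

Lemma Phi_neg (x : R) : Phi (- x) = 1 - Phi x.
Proof. rewrite !Phi_eq, G_odd. field. Qed.

Lemma Phi_tail (x : R) : 0 <= x -> Phi (- x) <= f0 x.
Proof.
  intros hx. rewrite Phi_eq, G_odd.
  destruct (G_sq_le x) as [h1 h2]. pose proof (G_nonneg x hx). pose proof cst_pos.
  pose proof PI_ge3. pose proof (f0_pos x).
  assert (e : (/ 2 - cst * G x) * (/ 2 + cst * G x) = (PI / 2 - G x ^ 2) / (2 * PI)).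
  { replace ((/ 2 - cst * G x) * (/ 2 + cst * G x)) with (/ 4 - cst ^ 2 * G x ^ 2) by field.
    rewrite cst_sq. field. lra. }
  assert (e2 : (PI / 2 - G x ^ 2) / (2 * PI) <= f0 x / PI).
  { apply (Rmult_le_reg_l (2 * PI)). lra.
    replace (2 * PI * ((PI / 2 - G x ^ 2) / (2 * PI))) with (PI / 2 - G x ^ 2) by (field; lra).
    replace (2 * PI * (f0 x / PI)) with (2 * f0 x) by (field; lra). lra. }
  assert (e3 : f0 x / PI <= f0 x / 3).
  { unfold Rdiv. apply Rmult_le_compat_l. lra. apply Rinv_le_contravar; lra. }
  assert (0 <= cst * G x) by nra.
  replace (/ 2 + cst * - G x) with (/ 2 - cst * G x) by ring.
  nra.
Qed.

Lemma Phi_incr (x y : R) : x < y -> Phi x < Phi y.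
Proof.
  intros h. rewrite !Phi_eq. pose proof (G_incr x y h). pose proof cst_pos. nra.
Qed.

Lemma Phi_le1 (x : R) : Phi x <= 1.
Proof. rewrite Phi_eq. pose proof (cG_le x). lra. Qed.

Lemma Phi_lt1 (x : R) : Phi x < 1.
Proof. pose proof (Phi_incr x (x + 1)). pose proof (Phi_le1 (x + 1)). lra. Qed.

Lemma Phi_pos (x : R) : 0 < Phi x.
Proof.
  replace x with (- - x) by ring. rewrite Phi_neg. pose proof (Phi_lt1 (- x)). lra.
Qed.

Lemma Phi0 : Phi 0 = / 2.
Proof. rewrite Phi_eq, G0. ring. Qed.

Lemma f0_le1 (t : R) : f0 t <= 1.
Proof.
  unfold f0. rewrite <- exp_0. destruct (Req_dec t 0).
  subst. right. f_equal. field. left. apply exp_increasing. nra.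
Qed.

Lemma f0_inv (t : R) : f0 t * exp (t ^ 2 / 2) = 1.
Proof. unfold f0. rewrite <- exp_plus. rewrite <- exp_0. f_equal. field. Qed.

Lemma f0_deriv (t : R) : is_derive f0 t (- t * f0 t).
Proof. unfold f0. auto_derive; auto. exp_norm. field. Qed.

Lemma PhiN_deriv (t : R) : is_derive (fun s => Phi (- s)) t (- cst * f0 t).
Proof.
  eapply dext. 3: apply (der_comp Phi (fun s => - s)). reflexivity.
  2: apply Phi_deriv. 2: auto_derive; auto. rq. rewrite f0_even. ring.
Qed.

Definition kM (t : R) : R := Phi (- t) - cst * t * f0 t / (1 + t ^ 2).

Lemma kM_deriv (t : R) : is_derive kM t (- 2 * cst * f0 t / (1 + t ^ 2) ^ 2).
Proof.
  eapply (dext (fun s => Phi (- s) + (-1) * (cst * s * f0 s / (1 + s ^ 2))) kM).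
  { intros; unfold kM; ring. }
  2:{ apply dplus. apply PhiN_deriv.
      apply (dmult (fun _ => -1) (fun s => cst * s * f0 s / (1 + s ^ 2))). apply dconst.
      unfold f0. auto_derive. nra. reflexivity. }
  unfold f0. rq. exp_norm. field. nra.
Qed.

Lemma kM_decr (s t : R) : s < t -> kM t < kM s.
Proof.
  intros h. assert (H : (fun u => - kM u) s < (fun u => - kM u) t).
  { apply (incr_der (fun u => - kM u) (fun u => - (- 2 * cst * f0 u / (1 + u ^ 2) ^ 2))); auto.
    - intros x _. eapply (dext (fun u => -1 * kM u)). intros; ring.
      2: apply (dmult (fun _ => -1) kM).
      2: apply dconst. 2: apply kM_deriv. rq; ring.
    - intros x _. pose proof (f0_pos x). pose proof cst_pos.
      assert (0 < (1 + x ^ 2) ^ 2) by nra.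
      cbv beta. assert (0 < cst * f0 x / (1 + x ^ 2) ^ 2) by (apply Rdiv_lt_0_compat; nra).
      unfold Rdiv in *. lra. }
  cbv beta in H. lra.
Qed.

Lemma mills (t : R) : 0 < t -> cst * t * f0 t < Phi (- t) * (1 + t ^ 2).
Proof.
  intros ht.
  assert (kpos : 0 < kM t).
  { destruct (Rle_dec (kM t) 0) as [hk|hk]; [|lra].
    pose proof (kM_decr t (t + 1) ltac:(lra)) as h1.
    set (d := - kM (t + 1)). assert (dpos : 0 < d) by (unfold d; lra).
    pose proof cst_pos.
    set (s := Rmax (t + 1) (2 * cst / d)).
    assert (hs1 : t + 1 <= s) by apply Rmax_l.
    assert (hs2 : 2 * cst / d <= s) by apply Rmax_r.
    assert (hks : kM s <= - d).
    { destruct (Req_dec s (t + 1)) as [e|e]. rewrite e; unfold d; lra.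
      pose proof (kM_decr (t + 1) s ltac:(lra)). unfold d; lra. }
    unfold kM in hks.
    pose proof (Phi_pos (- s)). pose proof (f0_le1 s). pose proof (f0_pos s).
    assert (h3 : cst * s * f0 s / (1 + s ^ 2) <= cst / s).
    { apply (Rmult_le_reg_r ((1 + s ^ 2) * s)). nra.
      replace (cst * s * f0 s / (1 + s ^ 2) * ((1 + s ^ 2) * s)) with (cst * s * s * f0 s) by (field; nra).
      replace (cst / s * ((1 + s ^ 2) * s)) with (cst * (1 + s ^ 2)) by (field; nra).
      assert (0 <= cst * (s * s)) by (apply Rmult_le_pos; nra).
      assert (cst * (s * s) * f0 s <= cst * (s * s) * 1) by (apply Rmult_le_compat_l; lra).
      nra. }
    assert (h4 : cst / s < d).
    { apply (Rmult_lt_reg_r s). lra. replace (cst / s * s) with cst by (field; lra).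
      apply (Rmult_le_compat_r d) in hs2; [|lra].
      replace (2 * cst / d * d) with (2 * cst) in hs2 by (field; lra). nra. }
    lra. }
  unfold kM in kpos. pose proof (f0_pos t).
  assert (0 < 1 + t ^ 2) by nra.
  apply (Rmult_lt_compat_r (1 + t ^ 2)) in kpos; auto.
  replace ((Phi (- t) - cst * t * f0 t / (1 + t ^ 2)) * (1 + t ^ 2)) with
    (Phi (- t) * (1 + t ^ 2) - cst * t * f0 t) in kpos by (field; lra).
  lra.
Qed.

Definition gM (t : R) : R := t * Phi (- t) * exp (t ^ 2 / 2).

Lemma gM_deriv (t : R) : is_derive gM t ((1 + t ^ 2) * Phi (- t) * exp (t ^ 2 / 2) - cst * t).
Proof.
  unfold gM. eapply dext. reflexivity. 2: apply dmult. 2: apply dmult.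
  3: apply PhiN_deriv. 2: apply is_derive_id. 2: auto_derive; auto.
  pose proof (f0_inv t). simpl. unfold one; simpl.
  replace (cst * t) with (cst * t * (f0 t * exp (t ^ 2 / 2))) by (rewrite H; ring).
  exp_norm. rq; field.
Qed.

Lemma gM_incr (s t : R) : s < t -> gM s < gM t.
Proof.
  intros h. apply (incr_der gM (fun t => (1 + t ^ 2) * Phi (- t) * exp (t ^ 2 / 2) - cst * t)); auto.
  - intros; apply gM_deriv.
  - intros x _. pose proof (Phi_pos (- x)). pose proof (exp_pos (x ^ 2 / 2)).
    pose proof cst_pos. assert (0 < 1 + x ^ 2) by nra.
    destruct (Rle_dec x 0).
    + assert (0 < (1 + x ^ 2) * Phi (- x)) by nra. nra.
    + pose proof (mills x ltac:(lra)) as hm. pose proof (f0_inv x) as hi.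
      assert (hh : cst * x * f0 x * exp (x ^ 2 / 2) < Phi (- x) * (1 + x ^ 2) * exp (x ^ 2 / 2)).
      { apply Rmult_lt_compat_r; auto. }
      replace (cst * x * f0 x * exp (x ^ 2 / 2)) with (cst * x) in hh
        by (rewrite Rmult_assoc, hi; ring).
      lra.
Qed.

Lemma D_pos_eq (l x : R) : 0 < x ->
  D_ l x = 2 * l ^ 2 * exp (l ^ 2 * (x - 1)) * Phi (l * (1 - 2 * x) / sqrt (2 * x)).
Proof. intros h. unfold D_. destruct (Rle_dec x 0); [lra|reflexivity]. Qed.

Lemma Gamma_pos_eq (l x : R) : 0 < x ->
  Gamma_ l x = D_ l x + 2 * l ^ 2 * Phi (- l / sqrt (2 * x)).
Proof. intros h. unfold Gamma_. destruct (Rle_dec x 0); [lra|reflexivity]. Qed.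

Lemma A_pos_eq (l x : R) : 0 < x -> A_ l x = - 2 * x * D_ l x + Gamma_ l x.
Proof. intros h. unfold A_. destruct (Rle_dec x 0); [lra|reflexivity]. Qed.

Lemma D_0 (l x : R) : x <= 0 -> D_ l x = 2 * l ^ 2 * exp (- l ^ 2).
Proof. intros h. unfold D_. destruct (Rle_dec x 0); [reflexivity|lra]. Qed.

Lemma Gamma_0 (l x : R) : x <= 0 -> Gamma_ l x = 2 * l ^ 2 * exp (- l ^ 2).
Proof. intros h. unfold Gamma_. destruct (Rle_dec x 0); [reflexivity|lra]. Qed.

Lemma A_0 (l x : R) : x <= 0 -> A_ l x = 2 * l ^ 2 * exp (- l ^ 2).
Proof. intros h. unfold A_. destruct (Rle_dec x 0); [reflexivity|lra]. Qed.

Definition pp (l x : R) := l / sqrt (2 * x).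
Definition qq (l x : R) := l * sqrt (2 * x) - l / sqrt (2 * x).

Lemma exp_eq_f0 (l x : R) : 0 < x ->
  exp (l ^ 2 * (x - 1)) = f0 (pp l x) * exp (qq l x ^ 2 / 2).
Proof.
  intros hx. unfold f0, pp, qq. rewrite <- exp_plus. f_equal.
  assert (hu : 0 < sqrt (2 * x)) by (apply sqrt_lt_R0; lra).
  assert (hu2 : sqrt (2 * x) * sqrt (2 * x) = 2 * x) by (apply sqrt_sqrt; lra).
  set (u := sqrt (2 * x)) in *. clearbody u.
  assert (ex : x = u * u / 2) by lra. subst x. field. lra.
Qed.

Lemma D_pq (l x : R) : 0 < x ->
  D_ l x = 2 * l ^ 2 * (f0 (pp l x) * exp (qq l x ^ 2 / 2)) * Phi (- qq l x).
Proof.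
  intros hx. rewrite D_pos_eq by auto. rewrite exp_eq_f0 by auto.
  f_equal. f_equal. unfold qq.
  assert (hu : 0 < sqrt (2 * x)) by (apply sqrt_lt_R0; lra).
  assert (hu2 : sqrt (2 * x) * sqrt (2 * x) = 2 * x) by (apply sqrt_sqrt; lra).
  set (u := sqrt (2 * x)) in *. clearbody u.
  assert (ex : x = u * u / 2) by lra. subst x. field. lra.
Qed.

Lemma Gamma_pq (l x : R) : 0 < x ->
  Gamma_ l x = D_ l x + 2 * l ^ 2 * Phi (- pp l x).
Proof.
  intros hx. rewrite Gamma_pos_eq by auto. unfold pp. do 3 f_equal. field.
  assert (hu : 0 < sqrt (2 * x)) by (apply sqrt_lt_R0; lra). lra.
Qed.

Lemma A_gM (l x : R) : 0 < l -> 0 < x ->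
  A_ l x = 2 * l ^ 2 * f0 (pp l x) / pp l x * (gM (pp l x) - gM (qq l x)).
Proof.
  intros hl hx. rewrite A_pos_eq, Gamma_pq, D_pq by auto. unfold gM.
  pose proof (f0_inv (pp l x)) as hi.
  assert (hu : 0 < sqrt (2 * x)) by (apply sqrt_lt_R0; lra).
  assert (hu2 : sqrt (2 * x) * sqrt (2 * x) = 2 * x) by (apply sqrt_sqrt; lra).
  assert (hp : 0 < pp l x) by (unfold pp; apply Rdiv_lt_0_compat; lra).
  assert (hqp : qq l x = (2 * x - 1) * pp l x).
  { unfold qq, pp. set (u := sqrt (2 * x)) in *. clearbody u.
    assert (ex : x = u * u / 2) by lra. subst x. field. lra. }
  set (P := pp l x) in *. set (Q := qq l x) in *.
  set (E := exp (Q ^ 2 / 2)). set (F := f0 P). set (EP := exp (P ^ 2 / 2)) in *.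
  replace (Q * Phi (- Q) * E) with ((2 * x - 1) * P * Phi (- Q) * E)
    by (rewrite <- hqp; reflexivity).
  replace (2 * l ^ 2 * F / P * (P * Phi (- P) * EP - (2 * x - 1) * P * Phi (- Q) * E))
    with (2 * l ^ 2 * (F * EP) * Phi (- P) - 2 * l ^ 2 * (2 * x - 1) * F * Phi (- Q) * E)
    by (field; lra).
  change (F * EP = 1) in hi. rewrite hi. ring.
Qed.

Lemma sq_facts (x : R) : 0 < x -> 0 < sqrt (2 * x) /\ sqrt (2 * x) * sqrt (2 * x) = 2 * x.
Proof. intros; split. apply sqrt_lt_R0; lra. apply sqrt_sqrt; lra. Qed.

Lemma pp_pos (l x : R) : 0 < l -> 0 < x -> 0 < pp l x.
Proof. intros. destruct (sq_facts x); auto. unfold pp; apply Rdiv_lt_0_compat; lra. Qed.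

Lemma qq_minus_pp (l x : R) : 0 < x ->
  qq l x - pp l x = l * (2 * x - 2) / sqrt (2 * x).
Proof.
  intros hx. destruct (sq_facts x hx) as [hu hu2]. unfold qq, pp.
  set (u := sqrt (2 * x)) in *. clearbody u.
  assert (ex : x = u * u / 2) by lra. subst x. field. lra.
Qed.

Lemma A_sign (l x : R) : 0 < l -> 0 < x ->
  (x < 1 -> 0 < A_ l x) /\ (1 < x -> A_ l x < 0) /\ (x = 1 -> A_ l x = 0).
Proof.
  intros hl hx. rewrite A_gM by auto. pose proof (qq_minus_pp l x hx) as hd.
  destruct (sq_facts x hx) as [hu hu2]. pose proof (pp_pos l x hl hx).
  pose proof (f0_pos (pp l x)).
  assert (hc : 0 < 2 * l ^ 2 * f0 (pp l x) / pp l x).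
  { apply Rdiv_lt_0_compat; auto. apply Rmult_lt_0_compat; auto. nra. }
  split; [|split].
  - intros h. assert (qq l x < pp l x).
    { assert (l * (2 * x - 2) / sqrt (2 * x) < 0).
      { assert (0 < l * (2 - 2 * x) / sqrt (2 * x)).
        { apply Rdiv_lt_0_compat; [apply Rmult_lt_0_compat|]; lra. }
        replace (l * (2 * x - 2) / sqrt (2 * x)) with (- (l * (2 - 2 * x) / sqrt (2 * x)))
          by (field; lra). lra. }
      lra. }
    pose proof (gM_incr _ _ H1). nra.
  - intros h. assert (pp l x < qq l x).
    { assert (0 < l * (2 * x - 2) / sqrt (2 * x)).
      { apply Rdiv_lt_0_compat; [apply Rmult_lt_0_compat|]; lra. }
      lra. }
    pose proof (gM_incr _ _ H1). nra.
  - intros h. subst x. assert (qq l 1 = pp l 1).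
    { replace (l * (2 * 1 - 2) / sqrt (2 * 1)) with 0 in hd by (field; lra). lra. }
    rewrite H1. ring.
Qed.

Lemma exp_mono (a b : R) : a <= b -> exp a <= exp b.
Proof. intros h. destruct (Req_dec a b). subst; lra. left; apply exp_increasing; lra. Qed.

Lemma exp_le1 (a : R) : a <= 0 -> exp a <= 1.
Proof. intros h. rewrite <- exp_0. apply exp_mono; lra. Qed.

Lemma qq_eq (l x : R) : 0 < x -> qq l x = (2 * x - 1) * pp l x.
Proof.
  intros hx. destruct (sq_facts x hx) as [hu hu2]. unfold qq, pp.
  set (u := sqrt (2 * x)) in *. clearbody u.
  assert (ex : x = u * u / 2) by lra. subst x. field. lra.
Qed.

Lemma f0_qq_cancel (q : R) : f0 q * exp (q ^ 2 / 2) = 1.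
Proof. apply f0_inv. Qed.

Lemma D_bound (l x : R) : 0 < l -> 0 <= x -> 0 < D_ l x <= 2 * l ^ 2.
Proof.
  intros hl hx. assert (hl2 : 0 < l ^ 2) by nra.
  destruct (Req_dec x 0) as [e|hx0].
  { rewrite D_0 by lra. pose proof (exp_pos (- l ^ 2)).
    assert (exp (- l ^ 2) <= 1) by (apply exp_le1; nra). nra. }
  assert (hxp : 0 < x) by lra.
  destruct (Rle_dec x (/ 2)) as [h|h].
  - rewrite D_pos_eq by auto.
    set (E := exp (l ^ 2 * (x - 1))). set (F := Phi (l * (1 - 2 * x) / sqrt (2 * x))).
    assert (0 < E) by apply exp_pos.
    assert (E <= 1) by (unfold E; apply exp_le1; nra).
    assert (0 < F) by apply Phi_pos. assert (F <= 1) by apply Phi_le1.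
    split. apply Rmult_lt_0_compat; auto. nra.
    assert (E * F <= 1) by nra. nra.
  - rewrite D_pq by auto. 
    pose proof (pp_pos l x hl hxp). rewrite (qq_eq l x hxp).
    set (P := pp l x) in *.
    assert (hQ : 0 <= (2 * x - 1) * P) by nra.
    set (Q := (2 * x - 1) * P) in *.
    pose proof (Phi_tail Q hQ). pose proof (Phi_pos (- Q)). pose proof (f0_pos Q).
    pose proof (f0_pos P). pose proof (f0_le1 P). pose proof (exp_pos (Q ^ 2 / 2)).
    pose proof (f0_qq_cancel Q) as hcq.
    split.
    + apply Rmult_lt_0_compat; [|auto]. apply Rmult_lt_0_compat; nra.
    + assert (Phi (- Q) * exp (Q ^ 2 / 2) <= 1).
      { rewrite <- hcq. apply Rmult_le_compat_r; lra. }
      assert (f0 P * exp (Q ^ 2 / 2) * Phi (- Q) <= 1).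
      { replace (f0 P * exp (Q ^ 2 / 2) * Phi (- Q)) with (f0 P * (Phi (- Q) * exp (Q ^ 2 / 2))) by ring.
        nra. }
      nra.
Qed.

Lemma Gamma_bound (l x : R) : 0 < l -> 0 <= x ->
  Rmin (l ^ 2 * exp (- l ^ 2)) (2 * l ^ 2 * Phi (- l)) <= Gamma_ l x <= 4 * l ^ 2.
Proof.
  intros hl hx. assert (hl2 : 0 < l ^ 2) by nra.
  pose proof (exp_pos (- l ^ 2)).
  destruct (Req_dec x 0) as [e|hx0].
  { rewrite Gamma_0 by lra.
    assert (exp (- l ^ 2) <= 1) by (apply exp_le1; nra).
    split; [|nra]. apply (Rle_trans _ (l ^ 2 * exp (- l ^ 2))). apply Rmin_l. nra. }
  assert (hxp : 0 < x) by lra.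
  rewrite Gamma_pq by auto. pose proof (D_bound l x hl hx).
  pose proof (Phi_pos (- pp l x)). pose proof (Phi_le1 (- pp l x)).
  split; [|nra].
  destruct (Rle_dec x (/ 2)) as [h|h].
  - apply (Rle_trans _ (l ^ 2 * exp (- l ^ 2))). apply Rmin_l.
    enough (l ^ 2 * exp (- l ^ 2) <= D_ l x) by nra.
    rewrite D_pos_eq by auto.
    assert (exp (- l ^ 2) <= exp (l ^ 2 * (x - 1))) by (apply exp_mono; nra).
    assert (/ 2 <= Phi (l * (1 - 2 * x) / sqrt (2 * x))).
    { rewrite <- Phi0. destruct (Req_dec x (/ 2)) as [e|ne].
      - right. f_equal. subst x. field. destruct (sq_facts (/2)); lra.
      - left. apply Phi_incr. destruct (sq_facts x); auto.
        apply Rdiv_lt_0_compat; [apply Rmult_lt_0_compat|]; lra. }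
    set (E := exp (l ^ 2 * (x - 1))) in *. set (F := Phi (l * (1 - 2 * x) / sqrt (2 * x))) in *.
    assert (exp (- l ^ 2) / 2 <= E * F) by nra.
    assert (l ^ 2 * (exp (- l ^ 2) / 2) <= l ^ 2 * (E * F)) by (apply Rmult_le_compat_l; lra).
    nra.
  - apply (Rle_trans _ (2 * l ^ 2 * Phi (- l))). apply Rmin_r.
    assert (Phi (- l) <= Phi (- pp l x)).
    { destruct (sq_facts x hxp) as [hu hu2].
      assert (1 < sqrt (2 * x)) by nra.
      left. apply Phi_incr. unfold pp.
      apply Ropp_lt_contravar. apply (Rmult_lt_reg_r (sqrt (2 * x))). lra.
      replace (l / sqrt (2 * x) * sqrt (2 * x)) with l by (field; lra). nra. }
    nra.
Qed.

Lemma E_f0_a (l x : R) : 0 < x ->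
  exp (l ^ 2 * (x - 1)) * f0 (l * (1 - 2 * x) / sqrt (2 * x)) = f0 (pp l x).
Proof.
  intros hx. unfold f0, pp. rewrite <- exp_plus. f_equal.
  destruct (sq_facts x hx) as [hu hu2].
  set (u := sqrt (2 * x)) in *. clearbody u.
  assert (ex : x = u * u / 2) by lra. subst x. field. lra.
Qed.

Lemma loc_pos (P : R -> Prop) (x : R) : 0 < x -> (forall y, 0 < y -> P y) -> locally x P.
Proof.
  intros hx H. apply (locally_interval P x (Finite 0) p_infty); simpl; auto.
Qed.

Definition dD (l x : R) : R :=
  l ^ 2 * D_ l x - 2 * l ^ 2 * cst * f0 (pp l x) * (pp l x ^ 3 / l ^ 2 + pp l x).

Lemma a_deriv (l x : R) : 0 < l -> 0 < x ->
  is_derive (fun y => l * (1 - 2 * y) / sqrt (2 * y)) x (- (pp l x ^ 3 / l ^ 2 + pp l x)).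
Proof.
  intros hl hx. destruct (sq_facts x hx) as [hu hu2].
  auto_derive.
  - repeat split; try lra. 
  - unfold pp. set (u := sqrt (2 * x)) in *. clearbody u.
    assert (ex : x = u * u / 2) by lra. subst x. field. lra.
Qed.

Lemma D_deriv (l x : R) : 0 < l -> 0 < x -> is_derive (D_ l) x (dD l x).
Proof.
  intros hl hx.
  apply (is_derive_ext_loc (fun y => 2 * l ^ 2 * exp (l ^ 2 * (y - 1)) *
                                     Phi (l * (1 - 2 * y) / sqrt (2 * y)))).
  { apply loc_pos; auto. intros y hy. symmetry. apply D_pos_eq; auto. }
  eapply dext. reflexivity. 2: apply dmult.
  3: apply (der_comp Phi (fun y => l * (1 - 2 * y) / sqrt (2 * y))).
  3: apply Phi_deriv. 3: apply a_deriv; auto.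
  2: auto_derive; auto; reflexivity.
  unfold dD. rewrite (D_pos_eq l x hx). rewrite <- (E_f0_a l x hx).
  rq. exp_norm. field. lra.
Qed.

Definition dG (l x : R) : R :=
  l ^ 2 * D_ l x - 2 * l ^ 2 * cst * f0 (pp l x) * pp l x.

Lemma Gamma_deriv (l x : R) : 0 < l -> 0 < x -> is_derive (Gamma_ l) x (dG l x).
Proof.
  intros hl hx. destruct (sq_facts x hx) as [hu hu2].
  apply (is_derive_ext_loc (fun y => D_ l y + 2 * l ^ 2 * Phi (- l / sqrt (2 * y)))).
  { apply loc_pos; auto. intros y hy. symmetry. apply Gamma_pos_eq; auto. }
  eapply dext. reflexivity. 2: apply dplus. 2: apply D_deriv; auto.
  2: apply (dmult (fun _ => 2 * l ^ 2) (fun y => Phi (- l / sqrt (2 * y)))).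
  2: apply dconst.
  2: apply (der_comp Phi (fun y => - l / sqrt (2 * y))). 2: apply Phi_deriv.
  2: auto_derive; [repeat split; lra | reflexivity].
  unfold dD, dG. rq. replace (- l / sqrt (2 * x)) with (- pp l x) by (unfold pp; field; lra).
  rewrite f0_even. unfold pp. set (u := sqrt (2 * x)) in *. clearbody u.
  assert (ex : x = u * u / 2) by lra. subst x. field. split; lra.
Qed.

Definition dA (l x : R) : R := - 2 * D_ l x - 2 * x * dD l x + dG l x.

Lemma A_deriv (l x : R) : 0 < l -> 0 < x -> is_derive (A_ l) x (dA l x).
Proof.
  intros hl hx.
  apply (is_derive_ext_loc (fun y => (- 2 * y) * D_ l y + Gamma_ l y)).
  { apply loc_pos; auto. intros y hy. symmetry. apply A_pos_eq; auto. }
  eapply dext. reflexivity. 2: apply dplus. 2: apply dmult.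
  2: auto_derive; auto; reflexivity. 2: apply D_deriv; auto. 2: apply Gamma_deriv; auto.
  unfold dA. rq. ring.
Qed.

Lemma f0_poly (p : R) : f0 p * (1 + p ^ 2 / 2 + p ^ 4 / 16) <= 1.
Proof.
  apply (Rle_trans _ (f0 p * exp (p ^ 2 / 2))); [| rewrite f0_inv; lra].
  apply Rmult_le_compat_l. left; apply f0_pos.
  assert (e : exp (p ^ 2 / 2) = exp (p ^ 2 / 4) * exp (p ^ 2 / 4)).
  { rewrite <- exp_plus. f_equal. field. }
  rewrite e. pose proof (exp_ineq1_le (p ^ 2 / 4)).
  assert (0 <= p ^ 2) by nra.
  apply Rle_trans with ((1 + p ^ 2 / 4) * (1 + p ^ 2 / 4)). right; field.
  apply Rmult_le_compat; lra.
Qed.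

Lemma f0_p3 (p : R) : 0 <= p -> p ^ 3 * f0 p <= 16.
Proof.
  intros h. pose proof (f0_poly p). pose proof (f0_pos p).
  assert (p ^ 3 <= 16 * (1 + p ^ 2 / 2 + p ^ 4 / 16)) by nra. nra.
Qed.

Lemma f0_p1 (p : R) : 0 <= p -> p * f0 p <= 1.
Proof.
  intros h. pose proof (f0_poly p). pose proof (f0_pos p).
  assert (p <= 1 + p ^ 2 / 2 + p ^ 4 / 16) by nra. nra.
Qed.

Lemma f0_p2 (p : R) : p ^ 2 * f0 p <= 2.
Proof.
  pose proof (f0_poly p). pose proof (f0_pos p).
  assert (p ^ 2 <= 2 * (1 + p ^ 2 / 2 + p ^ 4 / 16)) by nra. nra.
Qed.

Definition KD (l : R) := 2 * l ^ 4 + 2 * cst * (16 + l ^ 2).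
Definition KG (l : R) := 2 * l ^ 4 + 2 * l ^ 2 * cst.

Lemma dD_bound (l x : R) : 0 < l -> 0 < x -> Rabs (dD l x) <= KD l.
Proof.
  intros hl hx. unfold dD, KD. pose proof (D_bound l x hl (Rlt_le _ _ hx)).
  pose proof (pp_pos l x hl hx). set (p := pp l x) in *.
  pose proof (f0_p3 p (Rlt_le _ _ H0)). pose proof (f0_p1 p (Rlt_le _ _ H0)).
  pose proof (f0_pos p). pose proof cst_pos.
  assert (hl2 : 0 < l ^ 2) by nra.
  assert (e : 2 * l ^ 2 * cst * f0 p * (p ^ 3 / l ^ 2 + p) =
              2 * cst * (p ^ 3 * f0 p) + 2 * l ^ 2 * cst * (p * f0 p)) by (field; lra).
  rewrite e.
  assert (0 <= p ^ 3 * f0 p) by (apply Rmult_le_pos; [apply pow_le; lra | lra]).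
  assert (0 <= p * f0 p) by nra.
  assert (2 * cst * (p ^ 3 * f0 p) <= 2 * cst * 16) by nra.
  assert (2 * l ^ 2 * cst * (p * f0 p) <= 2 * l ^ 2 * cst) by
    (assert (0 <= 2 * l ^ 2 * cst) by nra; nra).
  assert (0 <= 2 * l ^ 2 * cst * (p * f0 p)) by (apply Rmult_le_pos; nra).
  assert (l ^ 2 * D_ l x <= 2 * l ^ 4) by nra.
  assert (0 <= l ^ 2 * D_ l x) by nra.
  apply Rabs_le. split; nra.
Qed.

Lemma dG_bound (l x : R) : 0 < l -> 0 < x -> Rabs (dG l x) <= KG l.
Proof.
  intros hl hx. unfold dG, KG. pose proof (D_bound l x hl (Rlt_le _ _ hx)).
  pose proof (pp_pos l x hl hx). set (p := pp l x) in *.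
  pose proof (f0_p1 p (Rlt_le _ _ H0)).
  pose proof (f0_pos p). pose proof cst_pos.
  assert (hl2 : 0 < l ^ 2) by nra.
  replace (2 * l ^ 2 * cst * f0 p * p) with (2 * l ^ 2 * cst * (p * f0 p)) by ring.
  assert (0 <= p * f0 p) by nra.
  assert (0 <= 2 * l ^ 2 * cst) by nra.
  assert (2 * l ^ 2 * cst * (p * f0 p) <= 2 * l ^ 2 * cst) by nra.
  assert (0 <= 2 * l ^ 2 * cst * (p * f0 p)) by (apply Rmult_le_pos; nra).
  assert (l ^ 2 * D_ l x <= 2 * l ^ 4) by nra.
  assert (0 <= l ^ 2 * D_ l x) by nra.
  apply Rabs_le. split; nra.
Qed.

Lemma abs_le_inv (a b : R) : Rabs a <= b -> - b <= a <= b.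
Proof. unfold Rabs. destruct (Rcase_abs a); intros; lra. Qed.

Definition KA (l : R) := 4 * l ^ 2 + 2 * KD l + KG l.

Lemma dA_bound (l x : R) : 0 < l -> 0 < x -> Rabs (dA l x) <= KA l * (1 + x).
Proof.
  intros hl hx. unfold dA, KA. pose proof (D_bound l x hl (Rlt_le _ _ hx)).
  pose proof (dD_bound l x hl hx). pose proof (dG_bound l x hl hx).
  assert (0 <= KD l) by (pose proof (Rabs_pos (dD l x)); lra).
  assert (0 <= KG l) by (pose proof (Rabs_pos (dG l x)); lra).
  assert (0 < l ^ 2) by nra.
  apply abs_le_inv in H0. apply abs_le_inv in H1. destruct H0, H1.
  assert (h8 : Rabs (2 * x * dD l x) <= 2 * x * KD l).
  { rewrite Rabs_mult. rewrite (Rabs_right (2 * x)) by lra.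
    apply Rmult_le_compat_l. lra. apply Rabs_le; lra. }
  apply abs_le_inv in h8. destruct h8.
  apply Rabs_le. split; nra.
Qed.

Lemma pp_sq (l x : R) : 0 < x -> pp l x ^ 2 = l ^ 2 / (2 * x).
Proof.
  intros hx. destruct (sq_facts x hx) as [hu hu2]. unfold pp.
  set (u := sqrt (2 * x)) in *. clearbody u.
  assert (ex : x = u * u / 2) by lra. subst x. field. lra.
Qed.

Lemma f0_pp_small (l x : R) : 0 < l -> 0 < x -> f0 (pp l x) <= 4 * x / l ^ 2.
Proof.
  intros hl hx. pose proof (f0_p2 (pp l x)). rewrite pp_sq in H by auto.
  assert (0 < l ^ 2) by nra.
  apply (Rmult_le_reg_l (l ^ 2 / (2 * x))). apply Rdiv_lt_0_compat; lra.
  replace (l ^ 2 / (2 * x) * (4 * x / l ^ 2)) with 2 by (field; lra). lra.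
Qed.

Lemma pf0_pp_small (l x : R) : 0 < l -> 0 < x -> pp l x * f0 (pp l x) <= 32 * x / l ^ 2.
Proof.
  intros hl hx. pose proof (pp_pos l x hl hx).
  pose proof (f0_p3 (pp l x) (Rlt_le _ _ H)). pose proof (pp_sq l x hx).
  set (p := pp l x) in *. assert (0 < l ^ 2) by nra.
  assert (p ^ 2 * (p * f0 p) <= 16) by (replace (p ^ 2 * (p * f0 p)) with (p ^ 3 * f0 p) by ring; lra).
  rewrite H1 in H3.
  apply (Rmult_le_reg_l (l ^ 2 / (2 * x))). apply Rdiv_lt_0_compat; lra.
  replace (l ^ 2 / (2 * x) * (32 * x / l ^ 2)) with 16 by (field; lra). lra.
Qed.

Definition D0 (l : R) := 2 * l ^ 2 * exp (- l ^ 2).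
Definition CD (l : R) := 2 * l ^ 4 + 8.

Lemma D_near0 (l x : R) : 0 < l -> 0 < x <= / 2 -> Rabs (D_ l x - D0 l) <= CD l * x.
Proof.
  intros hl [hx hx2]. rewrite D_pos_eq by auto. unfold D0, CD.
  destruct (sq_facts x hx) as [hu hu2].
  set (a := l * (1 - 2 * x) / sqrt (2 * x)).
  assert (ha : 0 <= a) by (apply Rmult_le_pos; [nra | left; apply Rinv_0_lt_compat; lra]).
  pose proof (Phi_tail a ha). rewrite Phi_neg in H.
  pose proof (E_f0_a l x hx) as hE. fold a in hE.
  pose proof (f0_pp_small l x hl hx).
  set (E := exp (l ^ 2 * (x - 1))) in *.
  assert (hE0 : 0 < E) by apply exp_pos.
  assert (hE1 : E <= 1) by (apply exp_le1; nra).
  assert (hEd : E = exp (- l ^ 2) * exp (l ^ 2 * x)) by (unfold E; rewrite <- exp_plus; f_equal; ring).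
  pose proof (exp_ineq1_le (- (l ^ 2 * x))) as hi.
  assert (hprod : exp (l ^ 2 * x) * exp (- (l ^ 2 * x)) = 1) by (rewrite <- exp_plus; replace (l ^ 2 * x + - (l ^ 2 * x)) with 0 by ring; apply exp_0).
  pose proof (exp_pos (l ^ 2 * x)). pose proof (exp_pos (- l ^ 2)).
  assert (hl2 : 0 < l ^ 2) by nra.
  assert (h1 : exp (l ^ 2 * x) * (1 - l ^ 2 * x) <= 1) by nra.
  assert (h2 : 0 <= E - exp (- l ^ 2) <= E * (l ^ 2 * x)).
  { rewrite hEd. split.
    - assert (1 <= exp (l ^ 2 * x)) by (rewrite <- exp_0; apply exp_mono; nra). nra.
    - nra. }
  assert (h3 : E * (1 - Phi a) <= 4 * x / l ^ 2).
  { apply (Rle_trans _ (E * f0 a)). apply Rmult_le_compat_l; lra. lra. }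
  pose proof (Phi_le1 a).
  assert (h4 : 0 <= E * (1 - Phi a)) by nra.
  replace (2 * l ^ 2 * E * Phi a - 2 * l ^ 2 * exp (- l ^ 2))
    with (2 * l ^ 2 * (E - exp (- l ^ 2)) - 2 * l ^ 2 * (E * (1 - Phi a))) by ring.
  assert (h5 : 2 * l ^ 2 * (E * (1 - Phi a)) <= 8 * x).
  { apply (Rle_trans _ (2 * l ^ 2 * (4 * x / l ^ 2))). nra. right; field; lra. }
  assert (h6 : 2 * l ^ 2 * (E - exp (- l ^ 2)) <= 2 * l ^ 4 * x).
  { assert (E * (l ^ 2 * x) <= l ^ 2 * x) by nra. nra. }
  assert (0 <= 2 * l ^ 2 * (E - exp (- l ^ 2))) by nra.
  assert (0 <= 2 * l ^ 2 * (E * (1 - Phi a))) by nra.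
  apply Rabs_le. split; nra.
Qed.

Lemma Gamma_near0 (l x : R) : 0 < l -> 0 < x <= / 2 ->
  Rabs (Gamma_ l x - D0 l) <= (CD l + 8) * x.
Proof.
  intros hl [hx hx2]. rewrite Gamma_pq by auto.
  pose proof (D_near0 l x hl (conj hx hx2)). apply abs_le_inv in H.
  pose proof (f0_pp_small l x hl hx). pose proof (pp_pos l x hl hx).
  pose proof (Phi_tail (pp l x) (Rlt_le _ _ H1)). pose proof (Phi_pos (- pp l x)).
  assert (hl2 : 0 < l ^ 2) by nra.
  assert (2 * l ^ 2 * Phi (- pp l x) <= 8 * x).
  { apply (Rle_trans _ (2 * l ^ 2 * (4 * x / l ^ 2))). nra. right; field; lra. }
  apply Rabs_le. split; nra.
Qed.

Lemma A_near0 (l x : R) : 0 < l -> 0 < x <= / 2 ->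
  Rabs (A_ l x - D0 l) <= (4 * l ^ 2 + CD l + 8) * x.
Proof.
  intros hl [hx hx2]. rewrite A_pos_eq by auto.
  pose proof (Gamma_near0 l x hl (conj hx hx2)). apply abs_le_inv in H.
  pose proof (D_bound l x hl (Rlt_le _ _ hx)).
  assert (0 <= 2 * x * D_ l x <= 4 * l ^ 2 * x) by (split; nra).
  apply Rabs_le. split; nra.
Qed.

Definition dA0 (l : R) := (l ^ 2 - 2) * D0 l.
Definition CdA (l : R) := (l ^ 2 + 2) * CD l + 2 * KD l + 64 * cst.

Lemma dA_near0 (l x : R) : 0 < l -> 0 < x <= / 2 ->
  Rabs (dA l x - dA0 l) <= CdA l * x.
Proof.
  intros hl [hx hx2].
  assert (e : dA l x - dA0 l = (l ^ 2 - 2) * (D_ l x - D0 l) - 2 * x * dD l x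
                              - 2 * l ^ 2 * cst * (pp l x * f0 (pp l x))).
  { unfold dA, dA0, dG. ring. }
  rewrite e. unfold CdA.
  pose proof (D_near0 l x hl (conj hx hx2)).
  pose proof (dD_bound l x hl hx). pose proof (pf0_pp_small l x hl hx).
  pose proof (pp_pos l x hl hx). pose proof (f0_pos (pp l x)). pose proof cst_pos.
  assert (hl2 : 0 < l ^ 2) by nra.
  assert (0 <= CD l) by (pose proof (Rabs_pos (D_ l x - D0 l)); nra).
  assert (t1 : Rabs ((l ^ 2 - 2) * (D_ l x - D0 l)) <= (l ^ 2 + 2) * (CD l * x)).
  { rewrite Rabs_mult. apply Rmult_le_compat; try apply Rabs_pos; auto.
    apply Rabs_le; split; lra. }
  assert (t2 : Rabs (2 * x * dD l x) <= 2 * x * KD l).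
  { rewrite Rabs_mult, (Rabs_right (2 * x)) by lra. apply Rmult_le_compat_l; lra. }
  assert (t3 : 0 <= 2 * l ^ 2 * cst * (pp l x * f0 (pp l x)) <= 64 * cst * x).
  { split. apply Rmult_le_pos; nra.
    apply (Rle_trans _ (2 * l ^ 2 * cst * (32 * x / l ^ 2))).
    apply Rmult_le_compat_l; nra. right; field; lra. }
  apply abs_le_inv in t1. apply abs_le_inv in t2.
  apply Rabs_le. split; nra.
Qed.

Lemma mvt_pos_bound (f df : R -> R) (B : R) (x y : R) :
  (forall z, 0 < z -> is_derive f z (df z)) -> 0 < x -> 0 < y ->
  (forall c, Rmin x y <= c <= Rmax x y -> Rabs (df c) <= B) ->
  Rabs (f x - f y) <= B * Rabs (x - y).
Proof.
  intros Hd hx hy Hb.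
  destruct (Rtotal_order x y) as [h|[h|h]].
  - destruct (mvt_der f df x y h) as [c [hc e]].
    { intros; apply Hd; lra. }
    rewrite Rmin_left, Rmax_right in Hb by lra.
    replace (f x - f y) with (- (df c * (y - x))) by lra.
    rewrite Rabs_Ropp, Rabs_mult. rewrite (Rabs_minus_sym x y).
    apply Rmult_le_compat_r. apply Rabs_pos. apply Hb; lra.
  - subst. rewrite !Rminus_diag, Rabs_R0. pose proof (Hb y ltac:(split; [apply Rmin_l|apply Rmax_l])).
    pose proof (Rabs_pos (df y)). lra.
  - destruct (mvt_der f df y x h) as [c [hc e]].
    { intros; apply Hd; lra. }
    rewrite Rmin_right, Rmax_left in Hb by lra.
    rewrite e, Rabs_mult. apply Rmult_le_compat_r. apply Rabs_pos. apply Hb; lra.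
Qed.

Lemma zero_pair (f : R -> R) (M C y : R) : 0 <= M -> 0 <= C ->
  (forall x, 0 <= x -> Rabs (f x) <= M) ->
  (forall x, 0 < x <= / 2 -> Rabs (f x - f 0) <= C * x) ->
  0 < y -> Rabs (f y - f 0) <= (C + 4 * M) * y.
Proof.
  intros hM hC Hb Hn hy. destruct (Rle_dec y (/ 2)).
  - pose proof (Hn y ltac:(lra)). assert (0 <= 4 * M * y) by nra. lra.
  - pose proof (Hb y ltac:(lra)). pose proof (Hb 0 ltac:(lra)).
    apply abs_le_inv in H. apply abs_le_inv in H0. apply Rabs_le. split; nra.
Qed.

Lemma lip_gen (f df : R -> R) (K M C : R) : 0 <= K -> 0 <= M -> 0 <= C ->
  (forall x, 0 < x -> is_derive f x (df x)) ->
  (forall x, 0 < x -> Rabs (df x) <= K) ->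
  (forall x, 0 <= x -> Rabs (f x) <= M) ->
  (forall x, 0 < x <= / 2 -> Rabs (f x - f 0) <= C * x) ->
  lipschitz_on_Rplus f.
Proof.
  intros hK hM hC Hd Hdb Hb Hn. exists (K + C + 4 * M). intros x y hx hy.
  destruct (Req_dec x 0) as [ex|ex]; destruct (Req_dec y 0) as [ey|ey].
  - subst. rewrite !Rminus_diag, Rabs_R0. lra.
  - subst. rewrite Rabs_minus_sym. pose proof (zero_pair f M C y hM hC Hb Hn ltac:(lra)).
    rewrite Rminus_0_l, Rabs_Ropp, (Rabs_right y) by lra. assert (0 <= K * y) by nra. lra.
  - subst. pose proof (zero_pair f M C x hM hC Hb Hn ltac:(lra)).
    rewrite Rminus_0_r, (Rabs_right x) by lra. assert (0 <= K * x) by nra. lra.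
  - pose proof (mvt_pos_bound f df K x y Hd ltac:(lra) ltac:(lra)) as H.
    assert (Rabs (f x - f y) <= K * Rabs (x - y)).
    { apply H. intros c hc. apply Hdb.
      assert (0 < Rmin x y) by (apply Rmin_glb_lt; lra). lra. }
    pose proof (Rabs_pos (x - y)). nra.
Qed.

Lemma lipA_gen (f df : R -> R) (K M C : R) : 0 <= K -> 0 <= M -> 0 <= C ->
  (forall x, 0 < x -> is_derive f x (df x)) ->
  (forall x, 0 < x -> Rabs (df x) <= K * (1 + x)) ->
  (forall x, 0 <= x -> Rabs (f x) <= M * (1 + x)) ->
  (forall x, 0 < x <= / 2 -> Rabs (f x - f 0) <= C * x) ->
  exists K', forall x y, 0 <= x -> 0 <= y ->
     Rabs (f x - f y) <= K' * (1 + Rabs x) * Rabs (y - x).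
Proof.
  intros hK hM hC Hd Hdb Hb Hn. exists (2 * K + 9 * M + C). intros x y hx hy.
  rewrite (Rabs_right x) by lra. rewrite (Rabs_minus_sym y x).
  assert (hK' : 0 <= 2 * K + 9 * M + C) by lra.
  assert (Z : forall z, 0 < z -> Rabs (f z - f 0) <= (C + 5 * M) * z).
  { intros z hz. destruct (Rle_dec z (/ 2)).
    - pose proof (Hn z ltac:(lra)). assert (0 <= 5 * M * z) by nra. lra.
    - pose proof (Hb z ltac:(lra)). pose proof (Hb 0 ltac:(lra)).
      apply abs_le_inv in H. apply abs_le_inv in H0. apply Rabs_le. split; nra. }
  destruct (Req_dec x 0) as [ex|ex]; destruct (Req_dec y 0) as [ey|ey].
  - subst. rewrite !Rminus_diag, Rabs_R0. lra.
  - subst. pose proof (Z y ltac:(lra)).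
    replace (Rabs (f 0 - f y)) with (Rabs (f y - f 0)) by apply Rabs_minus_sym.
    replace (Rabs (0 - y)) with y by (rewrite Rminus_0_l, Rabs_Ropp, Rabs_right; lra).
    assert (0 <= (2 * K + 4 * M) * y) by nra. nra.
  - subst. pose proof (Z x ltac:(lra)).
    replace (Rabs (x - 0)) with x by (rewrite Rminus_0_r, Rabs_right; lra).
    assert (0 <= (2 * K + 9 * M + C) * x * x) by (apply Rmult_le_pos; nra). nra.
  - assert (hx' : 0 < x) by lra. assert (hy' : 0 < y) by lra.
    destruct (Rle_dec y (2 * x + 1)) as [hyx|hyx].
    + pose proof (mvt_pos_bound f df (2 * K * (1 + x)) x y Hd hx' hy') as H.
      assert (Rabs (f x - f y) <= 2 * K * (1 + x) * Rabs (x - y)).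
      { apply H. intros c hc.
        assert (0 < Rmin x y) by (apply Rmin_glb_lt; lra).
        assert (Rmax x y <= 2 * x + 1) by (apply Rmax_lub; lra).
        pose proof (Hdb c ltac:(lra)). nra. }
      pose proof (Rabs_pos (x - y)).
      assert (0 <= (9 * M + C) * (1 + x) * Rabs (x - y)) by (apply Rmult_le_pos; nra). nra.
    + pose proof (Hb x hx). pose proof (Hb y hy).
      apply abs_le_inv in H. apply abs_le_inv in H0.
      rewrite (Rabs_left (x - y)) by lra.
      assert (Rabs (f x - f y) <= 4 * M * (y - x)).
      { apply Rabs_le. split; nra. }
      replace (- (x - y)) with (y - x) by ring.
      assert (0 <= (2 * K + 9 * M + C) * (x * (y - x))) by (apply Rmult_le_pos; nra).
      assert (4 * M * (y - x) <= (2 * K + 9 * M + C) * (y - x)) by nra.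
      replace ((2 * K + 9 * M + C) * (1 + x) * (y - x)) with
        ((2 * K + 9 * M + C) * (y - x) + (2 * K + 9 * M + C) * (x * (y - x))) by ring.
      lra.
Qed.

Lemma lim_eps (g : R -> R) (P : R -> Prop) (x L : R) :
  (forall eps, 0 < eps -> exists d, 0 < d /\
     forall y, P y -> Rabs (y - x) < d -> Rabs (g y - L) < eps) ->
  filterlim g (within P (locally x)) (locally L).
Proof.
  intros H Q [eps HQ]. destruct (H eps (cond_pos eps)) as [d [hd Hd]].
  exists (mkposreal d hd). intros y hy Py. apply HQ.
  apply Hd; auto.
Qed.

Lemma cont_eps (f : R -> R) (x : R) : continuity_pt f x ->
  forall eps, 0 < eps -> exists d, 0 < d /\ forall y, Rabs (y - x) < d -> Rabs (f y - f x) < eps.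
Proof.
  intros H eps he. destruct (H eps he) as [d [hd Hd]]. exists d. split; auto.
  intros y hy. destruct (Req_dec y x). subst. rewrite Rminus_diag, Rabs_R0. lra.
  apply (Hd y). split; [split; [exact I | intro e; apply H0; auto] | exact hy].
Qed.

Lemma cont_from_bound (f : R -> R) (x r C : R) : 0 < r -> 0 <= C ->
  (forall y, Rabs (y - x) <= r -> Rabs (f y - f x) <= C * Rabs (y - x)) ->
  continuity_pt f x.
Proof.
  intros hr hC H eps he. exists (Rmin r (eps / (C + 1))). split.
  { apply Rmin_pos; auto. apply Rdiv_lt_0_compat; lra. }
  intros y [_ hy]. simpl in hy. unfold R_dist in *.
  assert (h1 : Rabs (y - x) <= r) by (left; apply (Rlt_le_trans _ _ _ hy (Rmin_l _ _))).
  assert (h2 : Rabs (y - x) < eps / (C + 1)) by (apply (Rlt_le_trans _ _ _ hy (Rmin_r _ _))).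
  pose proof (H y h1). apply (Rle_lt_trans _ (C * Rabs (y - x))); auto.
  apply (Rle_lt_trans _ ((C + 1) * Rabs (y - x))). pose proof (Rabs_pos (y - x)); nra.
  apply (Rmult_lt_reg_l (/ (C + 1))). apply Rinv_0_lt_compat; lra.
  replace (/ (C + 1) * ((C + 1) * Rabs (y - x))) with (Rabs (y - x)) by (field; lra).
  replace (/ (C + 1) * eps) with (eps / (C + 1)) by (field; lra). auto.
Qed.

Definition dAe (l x : R) : R := if Rle_dec x 0 then dA0 l else dA l x.

Lemma dAe_pos (l x : R) : 0 < x -> dAe l x = dA l x.
Proof. intros h. unfold dAe. destruct (Rle_dec x 0); [lra|reflexivity]. Qed.

Lemma dAe_0 (l : R) : dAe l 0 = dA0 l.
Proof. unfold dAe. destruct (Rle_dec 0 0); [reflexivity|lra]. Qed.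

Lemma CA0_nonneg (l : R) : 0 < l -> 0 <= 4 * l ^ 2 + CD l + 8.
Proof. intros. unfold CD. assert (0 <= l ^ 2) by nra. assert (0 <= l ^ 4) by nra. lra. Qed.

Lemma A_cont0 (l : R) : 0 < l -> continuity_pt (A_ l) 0.
Proof.
  intros hl. apply (cont_from_bound _ 0 (/ 2) (4 * l ^ 2 + CD l + 8)); [lra| apply CA0_nonneg; auto|].
  intros y hy. rewrite Rminus_0_r in *. rewrite (A_0 l 0) by lra. fold (D0 l).
  destruct (Rle_dec y 0).
  - rewrite A_0 by lra. fold (D0 l). rewrite Rminus_diag, Rabs_R0.
    pose proof (CA0_nonneg l hl). pose proof (Rabs_pos y). nra.
  - rewrite (Rabs_right y) in * by lra. apply A_near0; auto. lra.
Qed.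

Lemma dA_cont (l x : R) : 0 < l -> 0 < x -> continuity_pt (dA l) x.
Proof.
  intros hl hx.
  set (e := fun y => 2 * y * (2 * l ^ 2 * cst * f0 (pp l y) * (pp l y ^ 3 / l ^ 2 + pp l y))
                     - 2 * l ^ 2 * cst * f0 (pp l y) * pp l y).
  assert (E : forall y, D_ l y * (l ^ 2 - 2 - 2 * l ^ 2 * y) + e y = dA l y).
  { intros y. unfold e, dA, dD, dG. ring. }
  assert (He : ex_derive e x).
  { unfold e, pp, f0. destruct (sq_facts x hx). auto_derive. repeat split; lra. }
  destruct He as [de He].
  apply (der_cont _ x (D_ l x * (- 2 * l ^ 2) + dD l x * (l ^ 2 - 2 - 2 * l ^ 2 * x) + de)).
  eapply dext. exact E. reflexivity. apply dplus. 2: exact He.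
  eapply dext. reflexivity. 2: apply dmult. 2: apply D_deriv; auto.
  2: auto_derive; auto; reflexivity. rq. cbv beta. ring.
Qed.

Lemma CdA_nonneg (l : R) : 0 < l -> 0 <= CdA l.
Proof.
  intros hl. pose proof (dA_near0 l (/ 4) hl ltac:(lra)). pose proof (Rabs_pos (dA l (/ 4) - dA0 l)).
  nra.
Qed.

Lemma A_C1 (l : R) : 0 < l -> C1_on_Rplus (A_ l).
Proof.
  intros hl. pose proof (CdA_nonneg l hl) as hC.
  assert (Hcont : forall x, 0 < x -> filterlim (dAe l) (within (fun y => 0 <= y) (locally x)) (locally (dAe l x))).
  { intros x hx. apply lim_eps. intros eps he.
    destruct (cont_eps _ _ (dA_cont l x hl hx) eps he) as [d [hd Hd]].
    exists (Rmin d x). split. apply Rmin_pos; auto.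
    intros y hy hyx. assert (Rabs (y - x) < d) by (apply (Rlt_le_trans _ _ _ hyx (Rmin_l _ _))).
    assert (Rabs (y - x) < x) by (apply (Rlt_le_trans _ _ _ hyx (Rmin_r _ _))).
    assert (0 < y) by (apply abs_le_inv in H0 || idtac; unfold Rabs in H0; destruct (Rcase_abs (y - x)); lra).
    rewrite !dAe_pos by auto. apply Hd; auto. }
  exists (dAe l). split.
  - intros x hx. destruct (Req_dec x 0) as [e|e].
    + subst x. apply lim_eps. intros eps he.
      exists (Rmin (/ 2) (eps / (CdA l + 1))). split.
      { apply Rmin_pos. lra. apply Rdiv_lt_0_compat; lra. }
      intros y [hy hy0] hyd. rewrite Rminus_0_r in *.
      assert (ypos : 0 < y) by lra. rewrite (Rabs_right y) in hyd by lra.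
      assert (y1 : y < / 2) by (apply (Rlt_le_trans _ _ _ hyd (Rmin_l _ _))).
      assert (y2 : y < eps / (CdA l + 1)) by (apply (Rlt_le_trans _ _ _ hyd (Rmin_r _ _))).
      destruct (mvt_cl (A_ l) (dAe l) 0 y) as [c [hc ec]]; [lra| | |].
      * intros z hz. rewrite dAe_pos by lra. apply A_deriv; lra.
      * intros z hz. destruct (Req_dec z 0). subst; apply A_cont0; auto.
        eapply der_cont. apply A_deriv; lra.
      * rewrite ec. replace (dAe l c * (y - 0) / y) with (dAe l c) by (field; lra).
        rewrite dAe_0.
        assert (Rabs (dAe l c - dA0 l) <= CdA l * y).
        { destruct (Req_dec c 0). subst. rewrite dAe_0, Rminus_diag, Rabs_R0. nra.
          rewrite dAe_pos by lra. apply (Rle_trans _ (CdA l * c)). apply dA_near0; auto; lra.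
          apply Rmult_le_compat_l; lra. }
        apply (Rle_lt_trans _ _ _ H).
        apply (Rle_lt_trans _ ((CdA l + 1) * y)). nra.
        apply (Rmult_lt_reg_l (/ (CdA l + 1))). apply Rinv_0_lt_compat; lra.
        replace (/ (CdA l + 1) * ((CdA l + 1) * y)) with y by (field; lra).
        replace (/ (CdA l + 1) * eps) with (eps / (CdA l + 1)) by (field; lra). auto.
    + assert (hx' : 0 < x) by lra. rewrite dAe_pos by auto.
      pose proof (A_deriv l x hl hx') as Hd. apply is_derive_Reals in Hd.
      apply lim_eps. intros eps he. destruct (Hd eps he) as [d Hd'].
      exists d. split. apply cond_pos. intros y [hy hyx] hyd.
      specialize (Hd' (y - x) ltac:(lra) hyd).
      replace (x + (y - x)) with y in Hd' by ring. exact Hd'.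
  - intros x hx. destruct (Req_dec x 0) as [e|e].
    + subst x. apply lim_eps. intros eps he.
      exists (Rmin (/ 2) (eps / (CdA l + 1))). split.
      { apply Rmin_pos. lra. apply Rdiv_lt_0_compat; lra. }
      intros y hy hyd. rewrite Rminus_0_r in *. rewrite (Rabs_right y) in hyd by lra.
      assert (y1 : y < / 2) by (apply (Rlt_le_trans _ _ _ hyd (Rmin_l _ _))).
      assert (y2 : y < eps / (CdA l + 1)) by (apply (Rlt_le_trans _ _ _ hyd (Rmin_r _ _))).
      rewrite dAe_0. destruct (Req_dec y 0).
      * subst. rewrite dAe_0, Rminus_diag, Rabs_R0. lra.
      * rewrite dAe_pos by lra. apply (Rle_lt_trans _ (CdA l * y)). apply dA_near0; auto; lra.
        apply (Rle_lt_trans _ ((CdA l + 1) * y)). nra.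
        apply (Rmult_lt_reg_l (/ (CdA l + 1))). apply Rinv_0_lt_compat; lra.
        replace (/ (CdA l + 1) * ((CdA l + 1) * y)) with y by (field; lra).
        replace (/ (CdA l + 1) * eps) with (eps / (CdA l + 1)) by (field; lra). auto.
    + apply Hcont. lra.
Qed.

Lemma gM_0 : gM 0 = 0.
Proof. unfold gM. ring. Qed.

Lemma A_unbounded (l : R) : 0 < l -> ~ bounded_below_on_Rplus (A_ l).
Proof.
  intros hl [M0 HM].
  assert (hg : 0 < gM l) by (rewrite <- gM_0; apply gM_incr; auto).
  pose proof (f0_pos l) as hf.
  set (k := 2 * l * f0 l * gM l).
  assert (hk : 0 < k) by (unfold k; apply Rmult_lt_0_compat; [|auto]; apply Rmult_lt_0_compat; lra).
  set (U := Rmax 2 ((2 * l ^ 2 - M0 + 1) / k)).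
  assert (hU1 : 2 <= U) by apply Rmax_l.
  assert (hU2 : (2 * l ^ 2 - M0 + 1) / k <= U) by apply Rmax_r.
  set (x := U ^ 2 / 2).
  assert (hx : 0 < x) by (unfold x; nra).
  assert (hsx : sqrt (2 * x) = U).
  { unfold x. replace (2 * (U ^ 2 / 2)) with (U ^ 2) by field. apply sqrt_pow2. lra. }
  specialize (HM x (Rlt_le _ _ hx)).
  rewrite A_gM in HM by auto.
  assert (hp : pp l x = l / U) by (unfold pp; rewrite hsx; reflexivity).
  assert (hq : qq l x = l * U - l / U) by (unfold qq; rewrite hsx; reflexivity).
  rewrite hp, hq in HM.
  assert (hp1 : 0 < l / U) by (apply Rdiv_lt_0_compat; lra).
  assert (hp2 : l / U <= l).
  { apply (Rmult_le_reg_r U). lra. replace (l / U * U) with l by (field; lra). nra. }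
  assert (hq1 : l <= l * U - l / U).
  { apply (Rmult_le_reg_r U). lra.
    replace ((l * U - l / U) * U) with (l * U * U - l) by (field; lra). assert (0 <= l * ((U - 2) * (U + 1))) by (apply Rmult_le_pos; nra). nra. }
  assert (hgq : gM l <= gM (l * U - l / U)).
  { destruct (Req_dec l (l * U - l / U)) as [e|e]. rewrite <- e; lra. left; apply gM_incr; lra. }
  assert (hfp : f0 l <= f0 (l / U)).
  { unfold f0. apply exp_mono. assert ((l / U) ^ 2 <= l ^ 2) by nra. lra. }
  set (Q := l * U - l / U) in *. set (P := l / U) in *.
  assert (e1 : 2 * l ^ 2 * f0 P / P * gM P = 2 * l ^ 2 * Phi (- P)).
  { unfold gM. pose proof (f0_inv P). 
    replace (2 * l ^ 2 * f0 P / P * (P * Phi (- P) * exp (P ^ 2 / 2)))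
      with (2 * l ^ 2 * Phi (- P) * (f0 P * exp (P ^ 2 / 2))) by (field; lra).
    rewrite H. ring. }
  assert (e2 : 2 * l ^ 2 * f0 P / P = 2 * l * U * f0 P) by (unfold P; field; lra).
  pose proof (Phi_le1 (- P)).
  assert (h3 : k * U <= 2 * l * U * f0 P * gM Q).
  { unfold k. assert (0 <= 2 * l * U) by nra.
    replace (2 * l * f0 l * gM l * U) with (2 * l * U * (f0 l * gM l)) by ring.
    replace (2 * l * U * f0 P * gM Q) with (2 * l * U * (f0 P * gM Q)) by ring.
    apply Rmult_le_compat_l; auto. apply Rmult_le_compat; lra. }
  assert (h4 : 2 * l ^ 2 - M0 + 1 <= k * U).
  { apply (Rmult_le_compat_r k) in hU2; [|lra].
    replace ((2 * l ^ 2 - M0 + 1) / k * k) with (2 * l ^ 2 - M0 + 1) in hU2 by (field; lra). lra. }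
  assert (e3 : 2 * l ^ 2 * f0 P / P * (gM P - gM Q) =
               2 * l ^ 2 * f0 P / P * gM P - 2 * l ^ 2 * f0 P / P * gM Q) by ring.
  rewrite e3, e1, e2 in HM.
  assert (0 < l ^ 2) by nra.
  nra.
Qed.

Lemma sqrt_lip (a b m : R) : 0 < m -> m <= a -> m <= b ->
  Rabs (sqrt a - sqrt b) <= / (2 * sqrt m) * Rabs (a - b).
Proof.
  intros hm ha hb.
  assert (hsm : 0 < sqrt m) by (apply sqrt_lt_R0; lra).
  assert (sqrt m <= sqrt a) by (apply sqrt_le_1_alt; lra).
  assert (sqrt m <= sqrt b) by (apply sqrt_le_1_alt; lra).
  assert (e : a - b = (sqrt a - sqrt b) * (sqrt a + sqrt b)).
  { replace ((sqrt a - sqrt b) * (sqrt a + sqrt b)) with (sqrt a * sqrt a - sqrt b * sqrt b) by ring.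
    rewrite !sqrt_sqrt by lra. ring. }
  rewrite e, Rabs_mult, (Rabs_right (sqrt a + sqrt b)) by lra.
  apply (Rmult_le_reg_l (2 * sqrt m)). lra.
  replace (2 * sqrt m * (/ (2 * sqrt m) * (Rabs (sqrt a - sqrt b) * (sqrt a + sqrt b))))
    with (Rabs (sqrt a - sqrt b) * (sqrt a + sqrt b)) by (field; lra).
  pose proof (Rabs_pos (sqrt a - sqrt b)). nra.
Qed.

Theorem lemma4p2 (l : R) (hl : 0 < l) :
  (pos_on_Rplus (D_ l) /\ lipschitz_on_Rplus (D_ l) /\ bounded_on_Rplus (D_ l)) /\
  (pos_on_Rplus (Gamma_ l) /\ lipschitz_on_Rplus (Gamma_ l) /\ bounded_on_Rplus (Gamma_ l)) /\
  (pos_on_Rplus (fun x => sqrt (Gamma_ l x)) /\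
   lipschitz_on_Rplus (fun x => sqrt (Gamma_ l x)) /\
   bounded_on_Rplus (fun x => sqrt (Gamma_ l x))) /\
  bounded_above_on_Rplus (A_ l) /\ ~ bounded_below_on_Rplus (A_ l) /\
  C1_on_Rplus (A_ l) /\
  loc_lipschitz_on_Rplus (A_ l) /\
  (exists K, forall x y, 0 <= x -> 0 <= y ->
     Rabs (A_ l x - A_ l y) <= K * (1 + Rabs x) * Rabs (y - x)) /\
  (forall x, 0 <= x < 1 -> 0 < A_ l x) /\
  (forall x, 1 < x -> A_ l x < 0) /\
  A_ l 1 = 0.
Proof.
  assert (hl2 : 0 < l ^ 2) by nra.
  assert (hD0 : D_ l 0 = D0 l) by (apply D_0; lra).
  assert (hG0 : Gamma_ l 0 = D0 l) by (apply Gamma_0; lra).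
  assert (hA0 : A_ l 0 = D0 l) by (apply A_0; lra).
  assert (hKD : 0 <= KD l) by (pose proof (dD_bound l 1 hl ltac:(lra)); pose proof (Rabs_pos (dD l 1)); lra).
  assert (hKG : 0 <= KG l) by (pose proof (dG_bound l 1 hl ltac:(lra)); pose proof (Rabs_pos (dG l 1)); lra).
  assert (hCD : 0 <= CD l) by (unfold CD; nra).
  set (m := Rmin (l ^ 2 * exp (- l ^ 2)) (2 * l ^ 2 * Phi (- l))).
  assert (hm : 0 < m).
  { unfold m. apply Rmin_pos. apply Rmult_lt_0_compat; auto. apply exp_pos.
    apply Rmult_lt_0_compat. lra. apply Phi_pos. }
  assert (DB : forall x, 0 <= x -> Rabs (D_ l x) <= 2 * l ^ 2).
  { intros x hx. destruct (D_bound l x hl hx). rewrite Rabs_right; lra. }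
  assert (GB : forall x, 0 <= x -> Rabs (Gamma_ l x) <= 4 * l ^ 2).
  { intros x hx. destruct (Gamma_bound l x hl hx). fold m in H. rewrite Rabs_right; lra. }
  assert (Glip : lipschitz_on_Rplus (Gamma_ l)).
  { apply (lip_gen _ (dG l) (KG l) (4 * l ^ 2) (CD l + 8)); try lra; auto.
    - intros; apply Gamma_deriv; auto.
    - intros; apply dG_bound; auto.
    - intros x hx. rewrite hG0. apply Gamma_near0; auto. }
  split; [|split; [|split; [|split; [|split; [|split; [|split; [|split; [|split; [|split]]]]]]]]].
  - split; [|split].
    + intros x hx. apply D_bound; auto.
    + apply (lip_gen _ (dD l) (KD l) (2 * l ^ 2) (CD l)); try lra; auto.
      * intros; apply D_deriv; auto.
      * intros; apply dD_bound; auto.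
      * intros x hx. rewrite hD0. apply D_near0; auto.
    + exists (2 * l ^ 2). auto.
  - split; [|split].
    + intros x hx. destruct (Gamma_bound l x hl hx). fold m in H. lra.
    + exact Glip.
    + exists (4 * l ^ 2). auto.
  - split; [|split].
    + intros x hx. apply sqrt_lt_R0. destruct (Gamma_bound l x hl hx). fold m in H. lra.
    + destruct Glip as [L HL]. exists (/ (2 * sqrt m) * L). intros x y hx hy.
      destruct (Gamma_bound l x hl hx) as [H H0]. destruct (Gamma_bound l y hl hy) as [H1 H2]. fold m in H, H1.
      apply (Rle_trans _ _ _ (sqrt_lip _ _ m hm H H1)).
      rewrite Rmult_assoc. apply Rmult_le_compat_l.
      left. apply Rinv_0_lt_compat. pose proof (sqrt_lt_R0 m hm). lra.
      apply HL; auto.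
    + exists (1 + 4 * l ^ 2). intros x hx. destruct (Gamma_bound l x hl hx) as [H H0]. fold m in H.
      rewrite Rabs_right by (apply Rle_ge, sqrt_pos).
      pose proof (sqrt_pos (Gamma_ l x)). pose proof (sqrt_sqrt (Gamma_ l x) ltac:(lra)).
      nra.
  - exists (4 * l ^ 2). intros x hx. destruct (Req_dec x 0).
    + subst. rewrite hA0. unfold D0. assert (exp (- l ^ 2) <= 1) by (apply exp_le1; nra). nra.
    + rewrite A_pos_eq by lra. rewrite Gamma_pq by lra.
      pose proof (D_bound l x hl hx). pose proof (Phi_le1 (- pp l x)). nra.
  - apply A_unbounded; auto.
  - apply A_C1; auto.
  -
    intros M hM.
    destruct (lipA_gen (A_ l) (dA l) (KA l) (4 * l ^ 2) (4 * l ^ 2 + CD l + 8)) as [K HK].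
    { pose proof (dA_bound l 1 hl ltac:(lra)). pose proof (Rabs_pos (dA l 1)). nra. }
    { lra. } { apply CA0_nonneg; auto. }
    { intros; apply A_deriv; auto. } { intros; apply dA_bound; auto. }
    { intros x hx. destruct (Req_dec x 0). subst. rewrite hA0. unfold D0.
      assert (exp (- l ^ 2) <= 1) by (apply exp_le1; nra).
      pose proof (exp_pos (- l ^ 2)). rewrite Rabs_right; nra.
      rewrite A_pos_eq by lra. pose proof (D_bound l x hl hx). pose proof (GB x hx).
      apply abs_le_inv in H1. apply Rabs_le. split; nra. }
    { intros x hx. rewrite hA0. apply A_near0; auto. }
    assert (hK : 0 <= K).
    { pose proof (HK 0 1 ltac:(lra) ltac:(lra)). rewrite Rabs_R0, Rminus_0_r, Rabs_R1 in H.
      pose proof (Rabs_pos (A_ l 0 - A_ l 1)). lra. }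
    exists (K * (1 + M)). intros x y hx hy.
    pose proof (HK x y (proj1 hx) (proj1 hy)). rewrite (Rabs_minus_sym y x) in H.
    rewrite (Rabs_right x) in H by lra. pose proof (Rabs_pos (x - y)).
    apply (Rle_trans _ _ _ H). apply Rmult_le_compat_r; auto. apply Rmult_le_compat_l; lra.
  - apply (lipA_gen (A_ l) (dA l) (KA l) (4 * l ^ 2) (4 * l ^ 2 + CD l + 8)).
    { pose proof (dA_bound l 1 hl ltac:(lra)). pose proof (Rabs_pos (dA l 1)). nra. }
    { lra. } { apply CA0_nonneg; auto. }
    { intros; apply A_deriv; auto. } { intros; apply dA_bound; auto. }
    { intros x hx. destruct (Req_dec x 0). subst. rewrite hA0. unfold D0.
      assert (exp (- l ^ 2) <= 1) by (apply exp_le1; nra).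
      pose proof (exp_pos (- l ^ 2)). rewrite Rabs_right; nra.
      rewrite A_pos_eq by lra. pose proof (D_bound l x hl hx). pose proof (GB x hx).
      apply abs_le_inv in H1. apply Rabs_le. split; nra. }
    { intros x hx. rewrite hA0. apply A_near0; auto. }
  - intros x [hx hx1]. destruct (Req_dec x 0).
    + subst. rewrite hA0. unfold D0. apply Rmult_lt_0_compat. lra. apply exp_pos.
    + apply (A_sign l x hl ltac:(lra)). auto.
  - intros x hx. apply (A_sign l x hl ltac:(lra)). auto.
  - apply (A_sign l 1 hl ltac:(lra)). auto.
Qed.
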